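(* Let $\mathcal{C}$ be a pre-Hilbert $*$-category and $A$ an object of $\mathcal{C}$. Then the ordered $*$-ring $\mathcal{C}(A,A)$ is inverse closed: for all Hermitian $a,b\in\mathcal{C}(A,A)$, if $a\geq b$ and $b\succ 0$, then $a\succ 0$.
   Context: A $*$-category is a category with a choice of $f^*\colon Y\to X$ for each $f\colon X\to Y$ such that $1^*=1$, $(gf)^*=f^*g^*$, $(f^* )^*=f$. A pre-Hilbert $*$-category is a $*$-category with (R1) a zero object, (R2) orthonormal biproducts of all pairs of objects (biproducts $(X,s_1,r_1,s_2,r_2)$ with $r_k=s_k^*$), (R3) an isometric kernel (kernel $m$ with $m^*m=1$) for every morphism, and (R4) every diagonal $\Delta\colon X\to X\oplus X$ a kernel of some morphism. Such a category is additive, so $\mathcal{C}(A,A)$ is a ring (addition from the additive structure, multiplication by composition) with involution $a\mapsto a^*$. An endomorphism $a$ is Hermitian if $a^*=a$. The canonical order on Hermitian elements of $\mathcal{C}(A,A)$: $a\leq b$ iff $b-a = y^*y$ for some object $Y$ and some $y\colon A\to Y$. Write $a\prec b$ (or $b\succ a$) if $a\leq b$ and $b-a$ is invertible. *)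

(* Defs.v *)
Set Implicit Arguments.
Unset Strict Implicit.

Record StarCat := {
  Ob : Type;
  Hom : Ob -> Ob -> Type;
  comp : forall X Y Z : Ob, Hom Y Z -> Hom X Y -> Hom X Z;
  idm : forall X : Ob, Hom X X;
  comp_assoc : forall (W X Y Z : Ob) (h : Hom Y Z) (g : Hom X Y) (f : Hom W X),
      comp h (comp g f) = comp (comp h g) f;
  comp_id_l : forall (X Y : Ob) (f : Hom X Y), comp (idm Y) f = f;
  comp_id_r : forall (X Y : Ob) (f : Hom X Y), comp f (idm X) = f;
  star : forall X Y : Ob, Hom X Y -> Hom Y X;
  star_idm : forall X : Ob, star (idm X) = idm X;
  star_comp : forall (X Y Z : Ob) (g : Hom Y Z) (f : Hom X Y),
      star (comp g f) = comp (star f) (star g);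
  star_star : forall (X Y : Ob) (f : Hom X Y), star (star f) = f
}.

Arguments comp {s X Y Z} _ _.
Arguments idm {s} X.
Arguments star {s X Y} _.
Arguments Hom s _ _ : clear implicits.
Arguments Ob s : clear implicits.

Section PreHilbert.
Variable C : StarCat.

Definition is_zero_object (Z : Ob C) : Prop :=
  forall X : Ob C,
    (inhabited (Hom C Z X) /\ forall f g : Hom C Z X, f = g) /\
    (inhabited (Hom C X Z) /\ forall f g : Hom C X Z, f = g).

Definition is_zero_mor (X Y : Ob C) (f : Hom C X Y) : Prop :=
  exists (Z : Ob C) (u : Hom C X Z) (v : Hom C Z Y),
    is_zero_object Z /\ f = comp v u.

Definition is_biproduct (A B W : Ob C)
    (s1 : Hom C A W) (r1 : Hom C W A) (s2 : Hom C B W) (r2 : Hom C W B) : Prop :=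
  comp r1 s1 = idm A /\ comp r2 s2 = idm B /\
  is_zero_mor (comp r1 s2) /\ is_zero_mor (comp r2 s1) /\
  (forall (V : Ob C) (f : Hom C V A) (g : Hom C V B),
      exists h : Hom C V W, (comp r1 h = f /\ comp r2 h = g) /\
        forall h' : Hom C V W, comp r1 h' = f -> comp r2 h' = g -> h' = h) /\
  (forall (V : Ob C) (f : Hom C A V) (g : Hom C B V),
      exists h : Hom C W V, (comp h s1 = f /\ comp h s2 = g) /\
        forall h' : Hom C W V, comp h' s1 = f -> comp h' s2 = g -> h' = h).

Definition is_orthonormal_biproduct (A B W : Ob C)
    (s1 : Hom C A W) (r1 : Hom C W A) (s2 : Hom C B W) (r2 : Hom C W B) : Prop :=
  is_biproduct s1 r1 s2 r2 /\ r1 = star s1 /\ r2 = star s2.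

Definition is_kernel (K X Y : Ob C) (m : Hom C K X) (f : Hom C X Y) : Prop :=
  is_zero_mor (comp f m) /\
  forall (V : Ob C) (g : Hom C V X), is_zero_mor (comp f g) ->
    exists h : Hom C V K, comp m h = g /\
      forall h' : Hom C V K, comp m h' = g -> h' = h.

Definition is_pre_hilbert : Prop :=
  (exists Z : Ob C, is_zero_object Z) /\
  (forall A B : Ob C, exists (W : Ob C) (s1 : Hom C A W) (r1 : Hom C W A)
       (s2 : Hom C B W) (r2 : Hom C W B), is_orthonormal_biproduct s1 r1 s2 r2) /\
  (forall (X Y : Ob C) (f : Hom C X Y), exists (K : Ob C) (m : Hom C K X),
       is_kernel m f /\ comp (star m) m = idm K) /\
  (forall (X W : Ob C) (s1 : Hom C X W) (r1 : Hom C W X) (s2 : Hom C X W)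
       (r2 : Hom C W X) (d : Hom C X W),
     is_orthonormal_biproduct s1 r1 s2 r2 ->
     comp r1 d = idm X -> comp r2 d = idm X ->
     exists (Y : Ob C) (g : Hom C W Y), is_kernel d g).

(** Addition of parallel morphisms induced by biproducts:
    h = f + g  iff  h = nabla o <f, g> for a biproduct Y (+) Y. *)
Definition is_sum (X Y : Ob C) (f g h : Hom C X Y) : Prop :=
  exists (W : Ob C) (s1 : Hom C Y W) (r1 : Hom C W Y) (s2 : Hom C Y W)
    (r2 : Hom C W Y) (u : Hom C X W) (n : Hom C W Y),
    is_biproduct s1 r1 s2 r2 /\
    comp r1 u = f /\ comp r2 u = g /\
    comp n s1 = idm Y /\ comp n s2 = idm Y /\
    h = comp n u.

Definition hermitian (A : Ob C) (a : Hom C A A) : Prop := star a = a.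

Definition invertible (A : Ob C) (d : Hom C A A) : Prop :=
  exists c : Hom C A A, comp c d = idm A /\ comp d c = idm A.

(** canonical order: a <= b iff b - a = y^* y, i.e. b = a + y^* y *)
Definition star_le (A : Ob C) (a b : Hom C A A) : Prop :=
  exists (Y : Ob C) (y : Hom C A Y), is_sum a (comp (star y) y) b.

Definition star_lt (A : Ob C) (a b : Hom C A A) : Prop :=
  star_le a b /\ exists d : Hom C A A, is_sum a d b /\ invertible d.

End PreHilbert.

(* Main.v *)
Require Import Defs.
From Stdlib Require Import Setoid.

Section Aux.
Variable C : StarCat.

Lemma zero_unique (X Y : Ob C) (f g : Hom C X Y) :
  is_zero_mor f -> is_zero_mor g -> f = g.
Proof.
  intros [Z [u [v [HZ ->]]]] [Z' [u' [v' [HZ' ->]]]].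
  destruct (HZ Z') as [[[t] _] _].
  destruct (HZ' X) as [_ [_ Hu]].
  destruct (HZ Y) as [[_ Hv] _].
  rewrite (Hu u' (comp t u)), (Hv v (comp v' t)).
  now rewrite comp_assoc.
Qed.

Lemma zero_comp_l (X Y W : Ob C) (f : Hom C X Y) (g : Hom C Y W) :
  is_zero_mor f -> is_zero_mor (comp g f).
Proof.
  intros [Z [u [v [HZ ->]]]]. exists Z, u, (comp g v). split; auto.
  now rewrite comp_assoc.
Qed.

Lemma zero_comp_r (X Y W : Ob C) (f : Hom C X Y) (g : Hom C W X) :
  is_zero_mor f -> is_zero_mor (comp f g).
Proof.
  intros [Z [u [v [HZ ->]]]]. exists Z, (comp u g), v. split; auto.
  now rewrite comp_assoc.
Qed.

Lemma sum_zero_l (X : Ob C) (z d e : Hom C X X) :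
  is_zero_mor z -> is_sum z d e -> e = d.
Proof.
  intros Hz [W [s1 [r1 [s2 [r2 [u [n [Hbp [H1 [H2 [Hn1 [Hn2 ->]]]]]]]]]]]].
  destruct Hbp as [E1 [E2 [Z12 [Z21 [Hprod _]]]]].
  destruct (Hprod X z d) as [h [_ Hh]].
  assert (Hu : u = h) by (apply Hh; auto).
  assert (Hs : comp s2 d = h).
  { apply Hh.
    - rewrite comp_assoc. apply zero_unique; auto. apply zero_comp_r; auto.
    - rewrite comp_assoc, E2. apply comp_id_l. }
  rewrite Hu, <- Hs, comp_assoc, Hn2. apply comp_id_l.
Qed.

Lemma sum_zero_intro (HC : is_pre_hilbert C) (X : Ob C) (z d : Hom C X X) :
  is_zero_mor z -> is_sum z d d.
Proof.
  intros Hz. destruct HC as [_ [R2 _]].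
  destruct (R2 X X) as [W [s1 [r1 [s2 [r2 [Hbp _]]]]]].
  pose proof Hbp as [E1 [E2 [Z12 [Z21 [_ Hcop]]]]].
  destruct (Hcop X (idm X) (idm X)) as [n [[Hn1 Hn2] _]].
  exists W, s1, r1, s2, r2, (comp s2 d), n.
  split; [exact Hbp|]. split.
  { rewrite comp_assoc. apply zero_unique; auto. apply zero_comp_r; auto. }
  split. { rewrite comp_assoc, E2. apply comp_id_l. }
  split; [exact Hn1|]. split; [exact Hn2|].
  rewrite comp_assoc, Hn2. now rewrite comp_id_l.
Qed.

End Aux.

Theorem proposition6p5 (C : StarCat) (HC : is_pre_hilbert C) (A : Ob C)
  (z a b : Hom C A A) (Hz : is_zero_mor z)
  (Ha : hermitian a) (Hb : hermitian b)
  (Hba : star_le b a) (Hb0 : star_lt z b) :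
  star_lt z a.
Proof.
  destruct Hb0 as [[Y0 [x Hx]] [d0 [Hd0 Hinv]]].
  apply sum_zero_l in Hx; auto. apply sum_zero_l in Hd0; auto.
  subst d0. destruct Hinv as [binv [Hbi1 Hbi2]].
  destruct Hba as [Y1 [y [W [s1 [r1 [s2 [r2 [u [n [Hbp [Hu1 [Hu2 [Hn1 [Hn2 Ha']]]]]]]]]]]]]].
  destruct Hbp as [E1 [E2 [Z12 [Z21 [Hprod Hcop]]]]].
  pose proof HC as [_ [R2 [R3 R4]]].
  destruct (R2 Y0 Y1) as [V [S1 [R1 [S2 [R2' [Hbv [HR1 HR2]]]]]]].
  pose proof Hbv as [F1 [F2 [G12 [G21 [Vprod Vcop]]]]].
  destruct (Vprod A x y) as [h [[Hh1 Hh2] _]].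
  destruct (Vcop W (comp s1 (star x)) (comp s2 (star y))) as [D [[HD1 HD2] _]].
  assert (Hhs : star h = comp n D).
  { destruct (Vcop A (star x) (star y)) as [k [_ Hk]].
    rewrite (Hk (star h)), (Hk (comp n D)); auto.
    - rewrite <- comp_assoc, HD1, comp_assoc, Hn1. apply comp_id_l.
    - rewrite <- comp_assoc, HD2, comp_assoc, Hn2. apply comp_id_l.
    - rewrite <- (star_star S1), <- HR1, <- star_comp, Hh1. reflexivity.
    - rewrite <- (star_star S2), <- HR2, <- star_comp, Hh2. reflexivity. }
  assert (Hr1D : comp r1 D = comp (star x) R1).
  { destruct (Vcop A (star x) (comp r1 (comp s2 (star y)))) as [k [_ Hk]].
    rewrite (Hk (comp r1 D)), (Hk (comp (star x) R1)); auto.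
    - rewrite <- comp_assoc, F1. apply comp_id_r.
    - rewrite <- comp_assoc. apply zero_unique.
      + apply zero_comp_l; auto.
      + rewrite comp_assoc. apply zero_comp_r; auto.
    - rewrite <- comp_assoc, HD1, comp_assoc, E1. apply comp_id_l.
    - rewrite <- comp_assoc, HD2. reflexivity. }
  assert (Hr2D : comp r2 D = comp (star y) R2').
  { destruct (Vcop A (comp r2 (comp s1 (star x))) (star y)) as [k [_ Hk]].
    rewrite (Hk (comp r2 D)), (Hk (comp (star y) R2')); auto.
    - rewrite <- comp_assoc. apply zero_unique.
      + apply zero_comp_l; auto.
      + rewrite comp_assoc. apply zero_comp_r; auto.
    - rewrite <- comp_assoc, F2. apply comp_id_r.
    - rewrite <- comp_assoc, HD1. reflexivity.
    - rewrite <- comp_assoc, HD2, comp_assoc, E2. apply comp_id_l. }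
  assert (HDh : comp D h = u).
  { destruct (Hprod A b (comp (star y) y)) as [k [_ Hk]].
    rewrite (Hk u), (Hk (comp D h)); auto.
    - rewrite comp_assoc, Hr1D, <- comp_assoc, Hh1. symmetry; exact Hx.
    - rewrite comp_assoc, Hr2D, <- comp_assoc, Hh2. reflexivity. }
  assert (Hah : a = comp (star h) h).
  { rewrite Ha', Hhs, <- comp_assoc, HDh. reflexivity. }
  clear Ha'.
  set (L := comp binv (comp (star x) R1)).
  assert (HL : comp L h = idm A).
  { unfold L. rewrite <- comp_assoc, <- comp_assoc, Hh1, <- Hx. exact Hbi1. }
  destruct (R2 V V) as [W2 [t1 [q1 [t2 [q2 [Hbw [Hq1 Hq2]]]]]]].
  pose proof Hbw as [K1 [K2 [_ [_ [Wprod _]]]]].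
  destruct (Wprod V (idm V) (idm V)) as [Dl [[HDl1 HDl2] _]].
  destruct (R4 V W2 t1 q1 t2 q2 Dl (conj Hbw (conj Hq1 Hq2)) HDl1 HDl2)
    as [Y' [k [Hk0 Hk]]].
  destruct (Wprod V (idm V) (comp h L)) as [P [[HP1 HP2] _]].
  set (f := comp k P).
  assert (Hfh : is_zero_mor (comp f h)).
  { assert (Ph : comp P h = comp Dl h).
    { destruct (Wprod A h h) as [m [_ Hm]].
      rewrite (Hm (comp P h)), (Hm (comp Dl h)); auto.
      - rewrite comp_assoc, HDl1. apply comp_id_l.
      - rewrite comp_assoc, HDl2. apply comp_id_l.
      - rewrite comp_assoc, HP1. apply comp_id_l.
      - rewrite comp_assoc, HP2, <- comp_assoc, HL. apply comp_id_r. }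
    unfold f. rewrite <- comp_assoc, Ph, comp_assoc. apply zero_comp_r; auto. }
  assert (Hfact : forall (T : Ob C) (g : Hom C T V), is_zero_mor (comp f g) ->
            g = comp h (comp L g)).
  { intros T g Hg. unfold f in Hg. rewrite <- comp_assoc in Hg.
    destruct (Hk T (comp P g) Hg) as [t [Ht _]].
    assert (E1' : g = t).
    { rewrite <- (comp_id_l g), <- HP1, <- comp_assoc, <- Ht, comp_assoc, HDl1.
      apply comp_id_l. }
    assert (E2' : comp h (comp L g) = t).
    { rewrite comp_assoc, <- HP2, <- comp_assoc, <- Ht, comp_assoc, HDl2.
      apply comp_id_l. }
    congruence. }
  destruct (R3 V Y' f) as [J [j [[Hj0 Hj] Hjj]]].
  destruct (Hj A h Hfh) as [sm [Hsm _]].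
  set (s' := comp L j).
  assert (Hjh : j = comp h s') by (apply Hfact; exact Hj0).
  assert (Hs's : comp s' sm = idm A).
  { unfold s'. rewrite <- comp_assoc, Hsm. exact HL. }
  assert (Hss' : comp sm s' = idm J).
  { assert (Hj2 : comp j (comp sm s') = j).
    { rewrite comp_assoc, Hsm. symmetry. exact Hjh. }
    rewrite <- Hjj. rewrite <- Hj2 at 2. rewrite comp_assoc, Hjj.
    symmetry. apply comp_id_l. }
  assert (Has : a = comp (star sm) sm).
  { rewrite Hah, <- Hsm, star_comp, <- comp_assoc, (comp_assoc (star j) j), Hjj,
      comp_id_l. reflexivity. }
  split.
  - exists V, h. rewrite Hah. apply sum_zero_intro; auto.
  - exists a. split; [apply sum_zero_intro; auto|].
    exists (comp s' (star s')). split.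
    + rewrite Has, <- comp_assoc, (comp_assoc (star s')), <- star_comp, Hss',
        star_idm, comp_id_l. exact Hs's.
    + rewrite Has, <- comp_assoc, (comp_assoc sm), Hss', comp_id_l, <- star_comp,
        Hs's. apply star_idm.
Qed.
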